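(* Let $p$ be the POP of length 4 defined by the single relation $1>2$ (labels $3,4$ isolated); equivalently, avoiding $p$ means avoiding all 12 patterns of length 4 whose first entry exceeds the second. Let $a(n)=|S_n(p)|$. Then $a(n)=n!$ for $n\in\{0,1,2,3\}$ and $a(n)=n(n-1)$ for $n\geq 4$. Moreover, $$\sum_{n\geq 0}a(n)x^n=\frac{1-2x+2x^2+2x^3-x^4}{(1-x)^3}.$$
   Context: An $n$-permutation is a word $\pi=\pi_1\cdots\pi_n$ containing each of $1,\ldots,n$ exactly once; $S_n$ is the set of $n$-permutations ($S_0$ consists of the empty permutation). A partially ordered pattern (POP) $p$ of length $k$ is a partial order on the label set $\{1,\ldots,k\}$; it is described by a set of generating relations, where a relation $x>y$ means that in an occurrence the entry in the $x$-th chosen position must be larger than the entry in the $y$-th chosen position, and labels not involved in any relation are unconstrained. An $n$-permutation $\pi$ contains $p$ if there are indices $1\leq i_1<\cdots<i_k\leq n$ such that $\pi_{i_x}>\pi_{i_y}$ whenever $x>y$ in the partial order; otherwise $\pi$ avoids $p$. $S_n(p)$ denotes the set of $n$-permutations avoiding $p$. *)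

(* Defs.v *)
From HB Require Import structures.
From mathcomp Require Import all_boot all_order all_algebra all_fingroup.
Set Implicit Arguments. Unset Strict Implicit. Unset Printing Implicit Defensive.

(* A POP of length k, given by its generating relations on the labels
   {0,..,k-1} (label x+1 of the paper is x here):  p x y  means  x > y. *)
Definition pop (k : nat) := rel 'I_k.

Definition contains_pop (k n : nat) (p : pop k) (s : {perm 'I_n}) : bool :=
  [exists f : {ffun 'I_k -> 'I_n},
     [forall x : 'I_k, forall y : 'I_k, (x < y)%N ==> (f x < f y)%N]
     && [forall x : 'I_k, forall y : 'I_k, p x y ==> (s (f y) < s (f x))%N]].

Definition avoids_pop (k n : nat) (p : pop k) (s : {perm 'I_n}) : bool :=
  ~~ contains_pop p s.

Definition num_avoiders (k : nat) (p : pop k) (n : nat) : nat :=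
  #|[set s : {perm 'I_n} | avoids_pop p s]|.

Definition pop_1gt2 : pop 4 := fun x y => (val x == 0%N) && (val y == 1%N).

(* Main.v *)
Require Import Defs.
From HB Require Import structures.
From mathcomp Require Import all_boot all_order all_algebra all_fingroup.
From mathcomp Require Import zify.
Import GRing.Theory Num.Theory.

Module Aux.
Set Implicit Arguments. Unset Strict Implicit.

Definition o4 (k : nat) (H : (k < 4)%N) : 'I_4 := Ordinal H.

Ltac incr4 Hf h1 h2 h3 :=
  have h1 := implyP (forallP (forallP Hf (@o4 0 isT)) (@o4 1 isT)) isT;
  have h2 := implyP (forallP (forallP Hf (@o4 1 isT)) (@o4 2 isT)) isT;
  have h3 := implyP (forallP (forallP Hf (@o4 2 isT)) (@o4 3 isT)) isT.

Lemma small n (s : {perm 'I_n}) : (n <= 3)%N -> avoids_pop pop_1gt2 s.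
Proof.
move=> hn; apply/negP => /existsP [f /andP [Hf _]].
incr4 Hf h1 h2 h3.
have h4 := ltn_ord (f (@o4 3 isT)).
have : (3 < n)%N.
  by rewrite (leq_ltn_trans _ h4) // (leq_trans _ h3) // ltnS (leq_trans _ h2) // ltnS (leq_trans _ h1).
lia.
Qed.

Definition Ppre m (s : {perm 'I_m.+2}) :=
  [forall i : 'I_m.+2, forall j : 'I_m.+2, ((i < j) && (j < m))%N ==> (s i < s j)%N].

Lemma avoid_iff m (s : {perm 'I_m.+2}) : (2 <= m)%N -> avoids_pop pop_1gt2 s = Ppre s.
Proof.
move=> hm; apply/idP/idP.
- move=> Hav; apply/forallP => i; apply/forallP => j; apply/implyP => /andP [hij hjm].
  rewrite ltnNge leq_eqVlt negb_or; apply/andP; split.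
    apply/negP => /eqP/val_inj/perm_inj eij; move: hij; rewrite eij; lia.
  apply/negP => hji; move/negP: Hav; apply.
  apply/existsP.
  exists [ffun x : 'I_4 => (inord (nth 0%N [:: val i; val j; m; m.+1] x) : 'I_m.+2)].
  apply/andP; split.
    apply/forallP => x; apply/forallP => y; apply/implyP.
    case: x => [[|[|[|[|x]]]] Hx] //; case: y => [[|[|[|[|y]]]] Hy] //= _;
      rewrite !ffunE /= !inordK; have := ltn_ord i; have := ltn_ord j; lia.
  apply/forallP => x; apply/forallP => y; apply/implyP.
  rewrite /pop_1gt2 => /andP [/eqP x0 /eqP y1].
  rewrite !ffunE x0 y1 /=.
  have -> : (inord j : 'I_m.+2) = j by apply/val_inj; rewrite /= inordK.
  have -> : (inord i : 'I_m.+2) = i by apply/val_inj; rewrite /= inordK.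
  exact: hji.
- move=> HP; apply/negP => /existsP [f /andP [Hf Hp]].
  incr4 Hf h1 h2 h3.
  have h01 := implyP (forallP (forallP Hp (@o4 0 isT)) (@o4 1 isT)) isT.
  have h4 := ltn_ord (f (@o4 3 isT)).
  have hm1 : (f (@o4 1 isT) < m)%N.
    by rewrite -(ltn_add2r 2) !addn2 (leq_ltn_trans _ h4) // (leq_trans _ h3) // ltnS (leq_trans _ h2).
  have := implyP (forallP (forallP HP (f (@o4 0 isT))) (f (@o4 1 isT))) (introT andP (conj h1 hm1)).
  by move=> c; move: h01; rewrite ltnNge (ltnW c).
Qed.


Section Count.
Variable m : nat.

Definition ps (s : {perm 'I_m.+2}) : seq nat := [seq val (s (inord i)) | i <- iota 0 m].

Lemma ps_sorted s : Ppre s -> sorted ltn (ps s).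
Proof.
move=> HP; apply: (@homo_sorted_in _ _ [pred i | (i < m)%N]); last first.
- exact: iota_ltn_sorted.
- by apply/allP => x; rewrite mem_iota.
move=> x y hx hy hxy /=.
have := implyP (forallP (forallP HP (inord x)) (inord y)); apply.
rewrite !inordK; move: hx hy; rewrite !inE; lia.
Qed.

Lemma ps_mem s v : (v \in ps s) = [&& (v < m.+2)%N, v != s (inord m) & v != s ord_max].
Proof.
apply/mapP/idP.
- case=> i; rewrite mem_iota add0n => /andP[_ him] ->; rewrite ltn_ord /=.
  apply/andP; split; apply/negP => /eqP /val_inj /perm_inj /(congr1 val);
    rewrite /= !inordK; lia.
- case/and3P => hv h1 h2.
  have [k sk] : exists k, s k = Ordinal hv by exists ((s^-1)%g (Ordinal hv)); rewrite permKV.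
  have km : (k : nat) != m.
    apply/eqP => ekm; have ek : k = inord m by apply/val_inj; rewrite /= inordK // ekm.
    by move: h1; rewrite -ek sk eqxx.
  have km1 : (k : nat) != m.+1.
    apply/eqP => ekm; have ek : k = ord_max by apply/val_inj; rewrite /= ekm.
    by move: h2; rewrite -ek sk eqxx.
  exists (k : nat); first by rewrite mem_iota add0n /=; have := ltn_ord k; move/eqP: km; move/eqP: km1; lia.
  by rewrite inord_val sk.
Qed.

Lemma Ppre_inj (s t : {perm 'I_m.+2}) : Ppre s -> Ppre t ->
  s (inord m) = t (inord m) -> s ord_max = t ord_max -> s = t.
Proof.
move=> Hs Ht e1 e2.
have E : ps s = ps t.
  apply: (irr_sorted_eq ltn_trans ltnn (ps_sorted Hs) (ps_sorted Ht)).
  by move=> v; rewrite !ps_mem e1 e2.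
apply/permP => k.
have [hk|hk] := ltnP (k : nat) m.
  have := congr1 (fun l => nth 0%N l (k : nat)) E.
  rewrite /ps /= !(nth_map 0%N) ?size_iota // nth_iota // add0n inord_val.
  by move/val_inj.
have := ltn_ord k; rewrite ltnS leq_eqVlt => /orP [/eqP ek|ek].
  by rewrite (_ : k = ord_max) //; apply/val_inj.
rewrite (_ : k = inord m) //; apply/val_inj; rewrite /= inordK //; lia.
Qed.

Lemma Ppre_surj (x y : 'I_m.+2) : x != y ->
  exists s : {perm 'I_m.+2}, [&& Ppre s, s (inord m) == x & s ord_max == y].
Proof.
move=> hxy.
set F := [seq i <- enum 'I_m.+2 | (i != x) && (i != y)].
set L := F ++ [:: x; y].
have uL : uniq L.
  rewrite cat_uniq filter_uniq ?enum_uniq //= inE hxy /= andbT.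
  by rewrite !mem_filter !eqxx /= andbF.
have mL : L =i enum 'I_m.+2.
  move=> i; rewrite mem_enum mem_cat mem_filter mem_enum !inE andbT.
  by case: (i == x); case: (i == y).
have sL : size L = m.+2.
  by rewrite (perm_size (uniq_perm uL (enum_uniq _) mL)) size_enum_ord.
have sF : size F = m by move: sL; rewrite size_cat /=; lia.
have finj : injective (fun i : 'I_m.+2 => nth x L i).
  move=> i j /eqP; rewrite nth_uniq ?sL // => /eqP; exact: val_inj.
exists (perm finj).
have sortF : sorted (relpre val ltn) F.
  apply: sorted_filter; first by move=> b a c; exact: ltn_trans.
  by rewrite -sorted_map val_enum_ord iota_ltn_sorted.
apply/and3P; split.
- apply/forallP => i; apply/forallP => j; apply/implyP => /andP [hij hjm].
  rewrite !permE /= /L !nth_cat sF hjm (ltn_trans hij hjm).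
  apply: (sorted_ltn_nth (fun b a c => @ltn_trans (val b) (val a) (val c)) x sortF);
    rewrite // inE sF //; exact: ltn_trans hij hjm.
- by rewrite permE /= /L nth_cat sF inordK // ltnn subnn.
- by rewrite permE /= /L nth_cat sF ltnNge leqnSn /= subSnn.
Qed.

Lemma card_pairs k : #|[set p : 'I_k * 'I_k | p.1 != p.2]| = k * k.-1.
Proof.
have := cardID [pred p : 'I_k * 'I_k | p.1 == p.2] [set: 'I_k * 'I_k].
rewrite cardsT card_prod card_ord.
have -> : #|[predI [set: 'I_k * 'I_k] & [pred p : 'I_k * 'I_k | p.1 == p.2]]|
          = #|[set (i, i) | i : 'I_k]|.
  apply: eq_card => [[a b]]; rewrite !inE /=; apply/eqP/imsetP.
    by move=> ->; exists b.
  by case=> c _ [-> ->].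
rewrite card_imset; last by move=> a b [].
rewrite card_ord.
have -> : #|[predD [set: 'I_k * 'I_k] & [pred p : 'I_k * 'I_k | p.1 == p.2]]|
          = #|[set p : 'I_k * 'I_k | p.1 != p.2]|.
  by apply: eq_card => p; rewrite !inE andbT.
case: k => [|k] /=; lia.
Qed.

Lemma card_Ppre : #|[set s : {perm 'I_m.+2} | Ppre s]| = m.+2 * m.+1.
Proof.
pose g (s : {perm 'I_m.+2}) := (s (inord m), s ord_max).
rewrite -(card_in_imset (f := g)); last first.
  move=> s t; rewrite !inE => Hs Ht [e1 e2]; exact: Ppre_inj.
rewrite -card_pairs; apply: eq_card => [[x y]]; rewrite !inE /=.
apply/imsetP/idP.
- case=> s; rewrite inE => Hs [-> ->].
  apply/negP => /eqP /perm_inj /(congr1 val); rewrite /= inordK //; lia.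
- move=> hxy; have [s /and3P [Hs /eqP e1 /eqP e2]] := Ppre_surj hxy.
  by exists s; rewrite ?inE // /g e1 e2.
Qed.

End Count.

End Aux.
Import Aux.

Lemma aE n : num_avoiders pop_1gt2 n = if (n <= 1)%N then 1%N else (n * n.-1)%N.
Proof.
rewrite /num_avoiders.
have [hn|hn] := leqP n 3.
  have -> : [set s : {perm 'I_n} | avoids_pop pop_1gt2 s] = setT.
    by apply/setP => s; rewrite !inE small.
  rewrite cardsT card_Sn.
  by case: n hn => [|[|[|[|n]]]].
case: n hn => [|[|m]] // hm.
have -> : [set s : {perm 'I_m.+2} | avoids_pop pop_1gt2 s] = [set s | Ppre s].
  by apply/setP => s; rewrite !inE avoid_iff //; lia.
by rewrite card_Ppre.
Qed.

Theorem theorem3p1 :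
  let a := num_avoiders pop_1gt2 in
  (forall n : nat, (n <= 3)%N -> a n = n`!) /\
  (forall n : nat, (4 <= n)%N -> a n = n * n.-1) /\
  (forall n : nat,
     (\sum_(k < (minn n 3).+1) (-1) ^+ k * ('C(3, k))%:Z * (a (n - k)%N)%:Z
      = nth 0 [:: 1; -2; 2; 2; -1] n)%R).
Proof.
move=> a; split; [|split].
- by move=> n hn; rewrite /a aE; case: n hn => [|[|[|[|n]]]].
- by move=> n hn; rewrite /a aE; case: n hn => [|[|n]].
- move=> n; case: n => [|[|[|[|[|k]]]]].
  1-5: by rewrite !big_ord_recr big_ord0 /= /a !aE.
  rewrite (_ : minn k.+4.+1 3 = 3) //.
  rewrite !big_ord_recr big_ord0 /= /a !aE /=.
  rewrite nth_nil !exprS !expr0 (_ : ('C(3, 1) = 3)%N) // (_ : ('C(3, 2) = 3)%N) // !bin0 binn. lia.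
Qed.
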